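(* Let $X$ and $Y$ be linearly stable sequence classes with $Y$ spherically complete and $X(\mathbb{K})\subseteq Y^{\rm dual}(\mathbb{K})$ with $\|\cdot\|_{Y^{\rm dual}(\mathbb{K})}\le\|\cdot\|_{X(\mathbb{K})}$. Let $E,F$ be Banach spaces, $T\in\mathcal{L}(E;F)$, and suppose $\alpha_{X,Y}$ is a reasonable quasi-norm on $E\otimes F^*$. (a) If $T\in\mathcal{L}_{X;Y^{\rm dual}}(E;F)$, then $\varphi_T\colon E\otimes_{\alpha_{X,Y}}F^*\to\mathbb{K}$ is continuous and $\|\varphi_T\|\le\|T\|_{X;Y^{\rm dual}}$. (b) If, in addition, $X$ and $Y$ are finitely determined or finitely dominated, then $\varphi_T\colon E\otimes_{\alpha_{X,Y}}F^*\to\mathbb{K}$ is continuous if and only if $T\in\mathcal{L}_{X;Y^{\rm dual}}(E;F)$, and in this case $\|T\|_{X;Y^{\rm dual}}=\|\varphi_T\|$.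
   Context: All Banach spaces are over $\mathbb{K}=\mathbb{R}$ or $\mathbb{C}$; $\mathcal{L}(E;F)$ is the space of bounded linear operators. A sequence class is a rule $X$ assigning to each Banach space $E$ a Banach space $X(E)$ which is a vector subspace of $E^{\mathbb{N}}$ (coordinatewise operations) with $c_{00}(E)\subseteq X(E)$, $\|(x_j)\|_\infty\le\|(x_j)\|_{X(E)}$, and $\|x\cdot e_j\|_{X(E)}=\|x\|_E$ ($x$ in the $j$-th coordinate, zeros elsewhere). $(x_j)_{j=1}^n$ denotes $(x_1,\dots,x_n,0,0,\dots)$. For sequence classes $X,Y$, $T\in\mathcal{L}(E;F)$ is $(X;Y)$-summing if $(T(x_j))_j\in Y(F)$ whenever $(x_j)_j\in X(E)$; then $\|T\|_{X;Y}$ is the operator norm of $(x_j)\mapsto(T x_j)$ from $X(E)$ to $Y(F)$, and $\mathcal{L}_{X;Y}(E;F)$ is the space of such operators. $X$ is linearly stable if every $T\in\mathcal{L}(E;F)$ is $(X;X)$-summing with $\|T\|_{X;X}=\|T\|$, for all $E,F$. $X$ is spherically complete if $(\lambda_jx_j)\in X(E)$ with the same norm whenever $(x_j)\in X(E)$ and $|\lambda_j|=1$ for all $j$. The dual class: $Y^{\rm dual}(E)$ is the set of $(x_j)\in E^{\mathbb{N}}$ such that $\sum_j\varphi_j(x_j)$ converges for all $(\varphi_j)\in Y(E^* )$, with norm $\|(x_j)\|_{Y^{\rm dual}}=\sup_{(\varphi_j)\in B_{Y(E^* )}}\sum_j|\varphi_j(x_j)|$. $X$ is finitely determined if for every $(x_j)\in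 E^{\mathbb{N}}$: $(x_j)\in X(E)$ iff $\sup_k\|(x_j)_{j=1}^k\|_{X(E)}<\infty$, and then $\|(x_j)\|_{X(E)}=\sup_k\|(x_j)_{j=1}^k\|_{X(E)}$. $X$ is finitely dominated if there is a finitely determined sequence class $Z$ such that for every $E$, $X(E)$ is a closed subspace of $Z(E)$ and either (i) for $(x_j)\in Z(E)$: $(x_j)\in X(E)$ iff $\lim_k\|(x_j)_{j=k}^\infty\|_{Z(E)}=0$, or (ii) for $(x_j)\in Z(E)$: $(x_j)\in X(E)$ iff $\lim_{k,l}\|(x_j)_{j=k}^l\|_{Z(E)}=0$. For $u\in E\otimes F$, $\alpha_{X,Y}(u)=\inf\{\|(x_j)_{j=1}^n\|_{X(E)}\|(y_j)_{j=1}^n\|_{Y(F)}:u=\sum_{j=1}^nx_j\otimes y_j\}$; a quasi-norm $\alpha$ is reasonable if $\varepsilon\le\alpha$ ($\varepsilon$ the injective tensor norm) and $\alpha(x\otimes y)\le\|x\|\|y\|$. For a linear $T\colon E\to F$, $\varphi_T\colon E\otimes F^*\to\mathbb{K}$ is the linear functional with $\varphi_T(\sum_{j=1}^n x_j\otimes\psi_j)=\sum_{j=1}^n\psi_j(T(x_j))$. *)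

(* Defs.v *)
From HB Require Import structures.
From mathcomp Require Import all_boot all_order all_algebra.
From mathcomp Require Import boolp classical_sets functions reals constructive_ereal ereal sequences.
From mathcomp Require Import complex.


Unset Strict Implicit.
Unset Printing Implicit Defensive.

Import Order.TTheory GRing.Theory Num.Theory.
Local Open Scope ring_scope.
Local Open Scope classical_set_scope.

Record scal (R : realType) := Scal {
  sK :> fieldType;
  kabs : sK -> R;
  kabs0 : kabs 0 = 0;
  kabs_ge0 : forall a, 0 <= kabs a;
  kabsM : forall a b, kabs (a * b) = kabs a * kabs b;
  kabsD : forall a b, kabs (a + b) <= kabs a + kabs b }.
Arguments Scal {R} sK kabs kabs0 kabs_ge0 kabsM kabsD.
Arguments sK {R} s.
Arguments kabs {R} s _.
Arguments kabs0 {R} s.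
Arguments kabs_ge0 {R} s a.
Arguments kabsM {R} s a b.
Arguments kabsD {R} s a b.

Definition realS (R : realType) : scal R :=
  @Scal R R (fun x => `|x|) (normr0 _) (fun x => normr_ge0 x)
    (fun x y => normrM x y) (fun x y => ler_normD x y).

Definition complexS (R : realType) : scal R :=
  @Scal R (R[i] : fieldType) (@Normc.normc R) (@Normc.normc0 R)
    (fun x => match x with Complex a b => sqrtr_ge0 _ end)
    (@Normc.normcM R) (@le_normcD R).

Record nspace (R : realType) (S : scal R) := NSpace {
  ncar :> lmodType S;
  nrm : ncar -> R }.

Arguments nspace {R} S.
Arguments NSpace {R S} ncar nrm.
Arguments ncar {R S} n.
Arguments nrm {R S} n _.

Set Implicit Arguments.

Section Spaces.
Context {R : realType} {S : scal R}.
Local Notation K := (sK S).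
Local Notation kabs := (kabs S).

Definition is_norm (E : nspace S) : Prop :=
  [/\ forall x : E, nrm E x = 0 <-> x = 0,
      forall (a : K) (x : E), nrm E (a *: x) = kabs a * nrm E x
    & forall x y : E, nrm E (x + y) <= nrm E x + nrm E y].

Definition complete (E : nspace S) : Prop :=
  forall u : nat -> E,
    (forall e : R, 0 < e -> exists N, forall m n, (N <= m)%N -> (N <= n)%N ->
        nrm E (u m - u n) < e) ->
    exists l : E, forall e : R, 0 < e -> exists N, forall n, (N <= n)%N ->
        nrm E (u n - l) < e.

Definition banach (E : nspace S) : Prop := is_norm E /\ complete E.

Definition kspace : nspace S := @NSpace R S (K^o) kabs.

Definition bdlin (E : nspace S) : {pred E -> K^o} :=
  fun f => `[< linear f /\ exists C : R, forall x, kabs (f x) <= C * nrm E x >].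

Arguments bdlin : clear implicits.

Lemma bdlin_submod (E : nspace S) : GRing.submod_closed (bdlin E).
Proof.
split.
  apply/asboolP; split.
    by move=> a u v; rewrite /= !scaler0 addr0.
  by exists 0 => x; rewrite mul0r /= (kabs0 S).
move=> a f g /asboolP [lf [C1 hC1]] /asboolP [lg [C2 hC2]].
apply/asboolP; split.
  move=> b u v; rewrite !fctE lf lg.
  by rewrite !scalerDr !scalerA [a * b]mulrC addrACA.
exists (kabs a * C1 + C2) => x /=.
rewrite !fctE; apply: (le_trans (kabsD S _ _)).
rewrite mulrDl; apply: lerD => //.
rewrite [_ *: _]/(_ * _) (kabsM S) -mulrA.
by apply: ler_wpM2l; [exact: (kabs_ge0 S)|].
Qed.

HB.instance Definition _ (E : nspace S) :=
  GRing.isSubmodClosed.Build _ _ (bdlin E) (bdlin_submod E).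

Definition dualT (E : nspace S) := {f : E -> K^o | f \in bdlin E}.

HB.instance Definition _ (E : nspace S) := [isSub for (@sval _ _ : dualT E -> _)].
HB.instance Definition _ (E : nspace S) := [Choice of dualT E by <:].
HB.instance Definition _ (E : nspace S) := [SubChoice_isSubLmodule of dualT E by <:].

Definition dnorm (E : nspace S) (f : dualT E) : R :=
  sup [set kabs (sval f x) | x in [set x : E | nrm E x <= 1]].

Definition dual (E : nspace S) : nspace S := @NSpace R S (dualT E) (@dnorm E).

Definition fapp (E : nspace S) (f : dual E) (x : E) : K := sval f x.

End Spaces.

(* A sequence class X is a rule assigning to each (Banach) space E a set    *)
(* X(E) of sequences (sc_mem X E) together with a norm (sc_norm X E),       *)
(* valued in the extended reals for convenience.  The axioms of a sequence  *)
(* class are collected in [is_seqclass]; they are only required for Banach  *)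
(* spaces E (values of X on non-Banach spaces are irrelevant).              *)

Record seqclass (R : realType) (S : scal R) := SeqClass {
  sc_mem : forall E : nspace S, (nat -> E) -> Prop;
  sc_norm : forall E : nspace S, (nat -> E) -> \bar R }.
Arguments seqclass {R} S.
Arguments SeqClass {R S} sc_mem sc_norm.
Arguments sc_mem {R S} s E _.
Arguments sc_norm {R S} s E _.

Section SeqClasses.
Context {R : realType} {S : scal R}.
Local Notation K := (sK S).
Local Notation kabs := (kabs S).
Local Open Scope ereal_scope.

Definition seq_at (E : nspace S) (x : E) (j : nat) : nat -> E :=
  fun i => if i == j then x else 0%R.

(* (x_j)_{j=1}^k : the first k terms, then zeros *)
Definition trunc (E : nspace S) (k : nat) (x : nat -> E) : nat -> E :=
  fun j => if (j < k)%N then x j else 0%R.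

Definition tailseq (E : nspace S) (k : nat) (x : nat -> E) : nat -> E :=
  fun j => if (k <= j)%N then x j else 0%R.

Definition segseq (E : nspace S) (k l : nat) (x : nat -> E) : nat -> E :=
  fun j => if (k <= j <= l)%N then x j else 0%R.

Definition is_seqclass (X : seqclass S) : Prop :=
  forall E : nspace S, banach E ->
  [/\
      sc_mem X E 0%R /\
      (forall (a : K) (x y : nat -> E), sc_mem X E x -> sc_mem X E y ->
         sc_mem X E (a *: x + y)%R),
      (forall x : nat -> E, (exists n, forall j, (n <= j)%N -> x j = 0%R) ->
         sc_mem X E x),
      [/\ forall x, sc_mem X E x -> sc_norm X E x \is a fin_num,
          forall x, sc_mem X E x -> (sc_norm X E x = 0 <-> x = 0%R),
          forall (a : K) x, sc_mem X E x ->
            sc_norm X E (a *: x)%R = (kabs a)%:E * sc_norm X E x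
        & forall x y, sc_mem X E x -> sc_mem X E y ->
            sc_norm X E (x + y)%R <= sc_norm X E x + sc_norm X E y],
      (forall w : nat -> nat -> E, (forall n, sc_mem X E (w n)) ->
         (forall e : R, (0 < e)%R -> exists N, forall m n, (N <= m)%N -> (N <= n)%N ->
            sc_norm X E (w m - w n)%R < e%:E) ->
         exists l, sc_mem X E l /\
           forall e : R, (0 < e)%R -> exists N, forall n, (N <= n)%N ->
             sc_norm X E (w n - l)%R < e%:E) /\
      (forall x, sc_mem X E x -> forall j, (nrm E (x j))%:E <= sc_norm X E x)
    &
      (forall (x : E) j, sc_mem X E (seq_at x j) /\
                         sc_norm X E (seq_at x j) = (nrm E x)%:E)].

Definition bounded_op (E F : nspace S) (T : E -> F) : Prop :=
  linear T /\ exists C : R, forall x, (nrm F (T x) <= C * nrm E x)%R.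

Definition opnorm (E F : nspace S) (T : E -> F) : \bar R :=
  ereal_sup [set (nrm F (T x))%:E | x in [set x : E | (nrm E x <= 1)%R]].

Definition summing (X Y : seqclass S) (E F : nspace S) (T : E -> F) : Prop :=
  forall x : nat -> E, sc_mem X E x -> sc_mem Y F (T \o x).

Definition sumnorm (X Y : seqclass S) (E F : nspace S) (T : E -> F) : \bar R :=
  ereal_sup [set sc_norm Y F (T \o x) |
             x in [set x : nat -> E | sc_mem X E x /\ sc_norm X E x <= 1]].

Definition linearly_stable (X : seqclass S) : Prop :=
  forall E F : nspace S, banach E -> banach F -> forall T : E -> F,
    bounded_op T -> summing X X T /\ sumnorm X X T = opnorm T.

Definition spherically_complete (X : seqclass S) : Prop :=
  forall E : nspace S, banach E -> forall (x : nat -> E) (l : nat -> K),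
    sc_mem X E x -> (forall j, kabs (l j) = 1%R) ->
    sc_mem X E (fun j => l j *: x j)%R /\
    sc_norm X E (fun j => l j *: x j)%R = sc_norm X E x.

Definition ksum_to (a : nat -> K) (l : K) : Prop :=
  forall e : R, (0 < e)%R -> exists N, forall n, (N <= n)%N ->
    (kabs (\sum_(j < n) a j - l) < e)%R.

Definition dual_class (Y : seqclass S) : seqclass S :=
  SeqClass
    (fun E x => forall phi : nat -> dual E, sc_mem Y (dual E) phi ->
        exists l : K, ksum_to (fun j => fapp (phi j) (x j)) l)
    (fun E x => ereal_sup
        [set (\sum_(0 <= j <oo) (kabs (fapp (phi j) (x j)))%:E) |
         phi in [set phi : nat -> dual E |
                 sc_mem Y (dual E) phi /\ sc_norm Y (dual E) phi <= 1]]).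

Definition fin_determined (X : seqclass S) : Prop :=
  forall E : nspace S, banach E -> forall x : nat -> E,
    (sc_mem X E x <-> ereal_sup (range (fun k => sc_norm X E (trunc k x))) < +oo) /\
    (sc_mem X E x ->
       sc_norm X E x = ereal_sup (range (fun k => sc_norm X E (trunc k x)))).

Definition closed_subspace (X Z : seqclass S) (E : nspace S) : Prop :=
  (forall x, sc_mem X E x -> sc_mem Z E x /\ sc_norm X E x = sc_norm Z E x) /\
  (forall (w : nat -> nat -> E) (x : nat -> E),
     (forall n, sc_mem X E (w n)) -> sc_mem Z E x ->
     (forall e : R, (0 < e)%R -> exists N, forall n, (N <= n)%N ->
        sc_norm Z E (w n - x)%R < e%:E) ->
     sc_mem X E x).

Definition fin_dominated (X : seqclass S) : Prop :=
  exists Z : seqclass S, is_seqclass Z /\ fin_determined Z /\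
    forall E : nspace S, banach E ->
      closed_subspace X Z E /\
      ((forall x, sc_mem Z E x ->
          (sc_mem X E x <->
             forall e : R, (0 < e)%R -> exists N, forall k, (N <= k)%N ->
               sc_norm Z E (tailseq k x) < e%:E)) \/
       (forall x, sc_mem Z E x ->
          (sc_mem X E x <->
             forall e : R, (0 < e)%R -> exists N, forall k l, (N <= k)%N -> (N <= l)%N ->
               sc_norm Z E (segseq k l x) < e%:E))).

(* Algebraic tensor product E (x) G, represented by finite lists of         *)
(* elementary tensors; two lists represent the same tensor iff every        *)
(* bilinear form takes the same value on them (universal property).         *)

Definition tens (E G : nspace S) := seq (E * G).

Definition bilinear_form (E G : nspace S) (B : E -> G -> K^o) : Prop :=
  (forall y : G, linear (fun x : E => B x y)) /\ (forall x : E, linear (B x)).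

Definition tens_eq (E G : nspace S) (u v : tens E G) : Prop :=
  forall B : E -> G -> K^o, bilinear_form B ->
    (\sum_(p <- u) B p.1 p.2 = \sum_(p <- v) B p.1 p.2)%R.

Definition tens_scale (E G : nspace S) (a : K) (u : tens E G) : tens E G :=
  map (fun p => (a *: p.1, p.2)%R) u.

Definition tens_add (E G : nspace S) (u v : tens E G) : tens E G := u ++ v.

Definition tens_sub (E G : nspace S) (u v : tens E G) : tens E G :=
  u ++ tens_scale (-1)%R v.

Definition alphaXY (X Y : seqclass S) (E G : nspace S) (u : tens E G) : \bar R :=
  ereal_inf [set sc_norm X E (fun j => nth 0%R (map fst v) j) *
                 sc_norm Y G (fun j => nth 0%R (map snd v) j) |
             v in [set v : tens E G | tens_eq v u]].

Definition quasi_norm (E G : nspace S) (a : tens E G -> \bar R) : Prop :=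
  [/\ forall u v, tens_eq u v -> a u = a v,
      forall u, a u \is a fin_num,
      forall u, a u = 0 <-> tens_eq u [::],
      forall (l : K) u, a (tens_scale l u) = (kabs l)%:E * a u
    & exists C : R, (1 <= C)%R /\
        forall u v, a (tens_add u v) <= C%:E * (a u + a v)].

Definition eps_norm (E F : nspace S) (u : tens E (dual F)) : \bar R :=
  ereal_sup [set (kabs (\sum_(p <- u) fapp pg.1 p.1 * fapp pg.2 p.2)%R)%:E |
             pg in [set pg : dual E * dual (dual F) |
                    (nrm (dual E) pg.1 <= 1)%R /\ (nrm (dual (dual F)) pg.2 <= 1)%R]].

Definition reasonable_qnorm (E F : nspace S) (a : tens E (dual F) -> \bar R) : Prop :=
  [/\ quasi_norm a,
      forall u, eps_norm u <= a u
    & forall (x : E) (y : dual F), a [:: (x, y)] <= (nrm E x * nrm (dual F) y)%:E].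

Definition phiT (E F : nspace S) (T : E -> F) (u : tens E (dual F)) : K :=
  (\sum_(p <- u) fapp p.2 (T p.1))%R.

Definition qcontinuous (E G : nspace S) (a : tens E G -> \bar R) (f : tens E G -> K) : Prop :=
  forall u0 : tens E G, forall e : R, (0 < e)%R -> exists2 d : R, (0 < d)%R &
    forall u, a (tens_sub u u0) < d%:E -> (kabs (f u - f u0) < e)%R.

Definition qfnorm (E G : nspace S) (a : tens E G -> \bar R) (f : tens E G -> K) : \bar R :=
  ereal_sup [set (kabs (f u))%:E | u in [set u : tens E G | a u <= 1]].

End SeqClasses.

Arguments alphaXY {R S} X Y E G u.
Arguments bdlin {R S} E.

(* Main.v *)
Require Import Defs.
From HB Require Import structures.
From mathcomp Require Import all_boot all_order all_algebra.
From mathcomp Require Import boolp classical_sets functions reals constructive_ereal ereal sequences.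
From mathcomp Require Import complex.
From mathcomp Require Import ring lra.
Import Order.TTheory GRing.Theory Num.Theory.
Local Open Scope ring_scope.

Section ScalFacts.
Context {R : realType} {S : scal R}.
Local Notation K := (sK S).
Local Notation kabs := (kabs S).
Context {emb : {rmorphism R -> K}}.
Hypothesis kabs_emb : forall r, kabs (emb r) = `|r|.
Hypothesis rot : forall z : K, exists l, kabs l = 1 /\ l * z = emb (kabs z).

Lemma kabs1 : kabs 1 = 1.
Proof. by rewrite -(rmorph1 emb) kabs_emb normr1. Qed.

Lemma kabsN1 : kabs (-1) = 1.
Proof. by rewrite -(rmorph1 emb) -rmorphN kabs_emb normrN normr1. Qed.

Lemma kabsN z : kabs (- z) = kabs z.
Proof. by rewrite -mulN1r (kabsM S) kabsN1 mul1r. Qed.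

Lemma kabs_eq0 z : kabs z = 0 -> z = 0.
Proof.
move=> h; have [l [l1 lz]] := rot z.
have l0 : l != 0 by apply/eqP => l0; move: l1; rewrite l0 (kabs0 S) => /eqP; rewrite eq_sym oner_eq0.
by move: lz; rewrite h rmorph0 => /eqP; rewrite mulf_eq0 (negbTE l0) /= => /eqP.
Qed.

Lemma kabsV z : kabs (z^-1) = (kabs z)^-1.
Proof.
have [->|z0] := eqVneq z 0; first by rewrite invr0 (kabs0 S) invr0.
have : kabs (z^-1) * kabs z = 1 by rewrite -(kabsM S) mulVf // kabs1.
move=> h; have kz : kabs z != 0 by apply/eqP => /kabs_eq0; apply/eqP.
by apply: (mulIf kz); rewrite h mulVf.
Qed.

Lemma kabsB a b : kabs a - kabs b <= kabs (a - b).
Proof.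
rewrite lerBlDr; apply: le_trans (kabsD S _ _); by rewrite subrK.
Qed.

Lemma kabsBC a b : kabs (a - b) = kabs (b - a).
Proof. by rewrite -kabsN opprB. Qed.

Lemma kabs_emb_pos r : 0 <= r -> kabs (emb r) = r.
Proof. by move=> r0; rewrite kabs_emb ger0_norm. Qed.

Lemma kabs_sum (I : Type) (s : seq I) (F : I -> K) :
  kabs (\sum_(i <- s) F i) <= \sum_(i <- s) kabs (F i).
Proof.
elim: s => [|a s IH]; first by rewrite !big_nil (kabs0 S).
rewrite !big_cons; apply: le_trans (kabsD S _ _) _; exact: lerD.
Qed.

Section NFacts.
Context {E : nspace S}.
Hypothesis nE : is_norm E.

Lemma nrm0 : nrm E 0 = 0.
Proof. by case: nE => h _ _; apply/h. Qed.

Lemma nrmZ a (x : E) : nrm E (a *: x) = kabs a * nrm E x.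
Proof. by case: nE. Qed.

Lemma nrmD (x y : E) : nrm E (x + y) <= nrm E x + nrm E y.
Proof. by case: nE. Qed.

Lemma nrmN (x : E) : nrm E (- x) = nrm E x.
Proof. by rewrite -scaleN1r nrmZ kabsN1 mul1r. Qed.

Lemma nrm_ge0 (x : E) : 0 <= nrm E x.
Proof.
have h : 0 <= nrm E x + nrm E x.
  by rewrite -{1}nrm0 -(subrr x) -[nrm E x in X in _ <= _ + X]nrmN nrmD.
by move: h; rewrite -mulr2n -mulr_natr pmulr_lge0.
Qed.

Lemma nrm_eq0 (x : E) : nrm E x = 0 -> x = 0.
Proof. by case: nE => h _ _; move/h. Qed.

Lemma nrmBC (x y : E) : nrm E (x - y) = nrm E (y - x).
Proof. by rewrite -nrmN opprB. Qed.

End NFacts.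
End ScalFacts.


Lemma bernoulli_ge {R : realFieldType} (d : R) n : 0 <= d -> 1 + d *+ n <= (1 + d) ^+ n.
Proof.
move=> d0; elim: n => [|n IH]; first by rewrite mulr0n expr0 addr0.
rewrite exprS mulrDl mul1r mulrSr addrA lerD //.
by rewrite ler_peMr // exprn_ege1 // lerDl.
Qed.

Lemma archi_nat {R : realType} (x : R) : exists n : nat, x < n%:R.
Proof.
have [x0|x0] := leP 0 x; first by exists (Num.Def.archi_bound x); exact: archi_boundP.
by exists 0%N; rewrite (lt_le_trans x0).
Qed.

Section UBP.
Context {R : realType} {S : scal R}.
Local Notation K := (sK S).
Local Notation kabs := (kabs S).
Context {emb : {rmorphism R -> K}}.
Hypothesis kabs_emb : forall r, kabs (emb r) = `|r|.
Hypothesis rot : forall z : K, exists l, kabs l = 1 /\ l * z = emb (kabs z).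

Lemma ubp (V : lmodType K) (M : V -> Prop) (N : V -> R) (I : Type) (P : I -> Prop)
  (f : I -> V -> K) :
  M 0 -> (forall a x y, M x -> M y -> M (a *: x + y)) ->
  (forall a x, M x -> N (a *: x) = kabs a * N x) ->
  (forall x y, M x -> M y -> N (x + y) <= N x + N y) ->
  (forall u : nat -> V, (forall n, M (u n)) ->
     (forall e, 0 < e -> exists N0, forall m n, (N0 <= m)%N -> (N0 <= n)%N -> N (u m - u n) < e) ->
     exists l, M l /\ forall e, 0 < e -> exists N0, forall n, (N0 <= n)%N -> N (u n - l) < e) ->
  (forall i, P i -> forall a x y, M x -> M y -> f i (a *: x + y) = a * f i x + f i y) ->
  (forall i, P i -> exists C, forall x, M x -> kabs (f i x) <= C * N x) ->
  (forall x, M x -> exists B, forall i, P i -> kabs (f i x) <= B) ->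
  exists C, forall i, P i -> forall x, M x -> kabs (f i x) <= C * N x.
Proof.
move=> M0 Mlin NZ ND Mcompl flin fbd fpw.
have MD x y : M x -> M y -> M (x + y) by move=> *; rewrite -[x]scale1r; apply: Mlin.
have MZ a x : M x -> M (a *: x) by move=> *; rewrite -[_ *: _]addr0; apply: Mlin.
have MN x : M x -> M (- x) by move=> *; rewrite -scaleN1r; apply: MZ.
have MB x y : M x -> M y -> M (x - y) by move=> *; apply: MD => //; apply: MN.
have N0 : N 0 = 0 by rewrite -(scale0r 0) NZ // (kabs0 S) mul0r.
have NN x : M x -> N (- x) = N x by move=> Mx; rewrite -scaleN1r NZ // (kabsN1 kabs_emb) mul1r.
have Nge0 x : M x -> 0 <= N x.
  move=> Mx; have : N 0 <= N x + N (- x) by rewrite -(subrr x) ND //; apply: MN.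
  by rewrite N0 NN // -mulr2n -mulr_natr pmulr_lge0.
have fZ i a x : P i -> M x -> f i (a *: x) = a * f i x.
  move=> Pi Mx; have := flin i Pi a x 0 Mx M0; rewrite addr0 => ->.
  have h := flin i Pi 1 0 0 M0 M0; rewrite scale1r addr0 mul1r in h.
  have f00 : f i 0 = 0 by apply: (@addrI _ (f i 0)); rewrite addr0 -h.
  by rewrite f00 addr0.
have fD i x y : P i -> M x -> M y -> f i (x + y) = f i x + f i y.
  by move=> Pi Mx My; rewrite -{1}[x]scale1r flin // mul1r.
have fN i x : P i -> M x -> f i (- x) = - f i x.
  by move=> Pi Mx; rewrite -scaleN1r fZ // mulN1r.
have fB i x y : P i -> M x -> M y -> f i (x - y) = f i x - f i y.
  by move=> Pi Mx My; rewrite fD ?fN //; exact: MN.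
have f0N i x : P i -> M x -> N x = 0 -> f i x = 0.
  move=> Pi Mx Nx; have [C hC] := fbd i Pi; apply: (kabs_eq0 rot).
  by apply/eqP; rewrite eq_le (kabs_ge0 S) andbT; have := hC x Mx; rewrite Nx mulr0.
have unit x : M x -> 0 < N x -> M (emb (N x)^-1 *: x) /\ N (emb (N x)^-1 *: x) = 1.
  move=> Mx Nx; split; first exact: MZ.
  by rewrite NZ // kabs_emb ger0_norm ?invr_ge0 ?(ltW Nx) // mulVf // gt_eqF.
case: (pselect (exists C, forall i, P i -> forall x, M x -> kabs (f i x) <= C * N x)) => // nC.
exfalso.
have big C : exists i, P i /\ exists x, [/\ M x, N x <= 1 & C < kabs (f i x)].
  apply: contrapT => hn; apply: nC; exists C => i Pi x Mx.
  have [Nx0|Nxp] := eqVneq (N x) 0.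
    by rewrite Nx0 mulr0 f0N // (kabs0 S).
  have Nxp' : 0 < N x by rewrite lt_def Nxp Nge0.
  have [My Ny] := unit x Mx Nxp'.
  rewrite leNgt; apply/negP => hlt; apply: hn; exists i; split => //.
  exists (emb (N x)^-1 *: x); split => //; first by rewrite Ny.
  rewrite fZ // (kabsM S) kabs_emb ger0_norm ?invr_ge0 ?(ltW Nxp') //.
  by rewrite mulrC ltr_pdivlMr.
pose A i := ((fun x => kabs (f i x)) @` [set x | M x /\ N x <= 1])%classic.
pose nf i := sup (A i).
have hsA i : P i -> has_sup (A i).
  move=> Pi; split; first by exists (kabs (f i 0)); exists 0 => //; split => //; rewrite N0.
  have [C hC] := fbd i Pi; exists (Num.max C 0) => _ [x [Mx Nx1] <-].
  apply: le_trans (hC x Mx) _.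
  apply: le_trans (_ : Num.max C 0 * N x <= _).
    by apply: ler_wpM2r; [exact: Nge0|rewrite le_max lexx].
  by rewrite -[X in _ <= X]mulr1 ler_wpM2l // le_max lexx orbT.
have nf_ub i x : P i -> M x -> N x <= 1 -> kabs (f i x) <= nf i.
  by move=> Pi Mx Nx; apply: sup_upper_bound (hsA i Pi) _ _; exists x.
have nf_ge0 i : P i -> 0 <= nf i.
  by move=> Pi; apply: le_trans (nf_ub i 0 Pi M0 _); rewrite ?(kabs_ge0 S) ?N0.
have nf_bd i x : P i -> M x -> kabs (f i x) <= nf i * N x.
  move=> Pi Mx; have [Nx0|Nxp] := eqVneq (N x) 0.
    by rewrite Nx0 mulr0 f0N // (kabs0 S).
  have Nxp' : 0 < N x by rewrite lt_def Nxp Nge0.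
  have [My Ny] := unit x Mx Nxp'.
  have := nf_ub i _ Pi My; rewrite Ny lexx => /(_ isT).
  rewrite fZ // (kabsM S) kabs_emb ger0_norm ?invr_ge0 ?(ltW Nxp') //.
  by rewrite mulrC ler_pdivrMr.
have sel n : exists p : I * V, [/\ P p.1, M p.2, N p.2 <= 1, 4 ^+ n <= nf p.1
      & nf p.1 * (2 / 3) < kabs (f p.1 p.2)].
  have [i [Pi [x [Mx Nx hx]]]] := big (4 ^+ n).
  have h4 : 4 ^+ n <= nf i by apply: le_trans (ltW hx) (nf_ub _ _ Pi Mx Nx).
  have nfp : 0 < nf i by apply: lt_le_trans h4; rewrite exprn_gt0.
  have [_ [y [My Ny] <-] hy] := sup_adherent (divr_gt0 nfp (ltr0n _ 3)) (hsA i Pi).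
  exists (i, y); split => //=.
  apply: le_lt_trans hy; rewrite -/(nf i); lra.
have [g hg] := choice sel.
pose r n : R := (3^-1) ^+ n.
have r_ge0 n : 0 <= r n by rewrite exprn_ge0 // invr_ge0.
have rS n : r n.+1 = r n / 3 by rewrite /r exprSr.
pose xi n := emb (r n) *: (g n).2.
pose fi n := f (g n).1.
pose xs := fix xs n := match n with
  | 0%N => 0
  | n'.+1 => if kabs (fi n'.+1 (xs n' - xi n'.+1)) <= kabs (fi n'.+1 (xs n' + xi n'.+1))
      then xs n' + xi n'.+1 else xs n' - xi n'.+1 end.
have Mg n : M (g n).2 by case: (hg n).
have Pg n : P (g n).1 by case: (hg n).
have Mxi n : M (xi n) by apply: MZ.
have Mxs n : M (xs n) by elim: n => [|n IH] //=; case: ifP => _; [apply: MD|apply: MB].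
have Nxi n : N (xi n) <= r n.
  rewrite NZ // kabs_emb ger0_norm //; rewrite -[X in _ <= X]mulr1 ler_wpM2l //.
  by case: (hg n).
have step n : N (xs n.+1 - xs n) <= r n.+1.
  rewrite /=; case: ifP => _; first by rewrite addrC addKr.
  by rewrite addrC addKr NN.
have cauchy n m : (n <= m)%N -> N (xs m - xs n) <= (r n - r m) / 2.
  elim: m => [|m IH]; first by rewrite leqn0 => /eqP ->; rewrite !subrr N0 mul0r.
  rewrite leq_eqVlt => /orP [/eqP ->|hnm]; first by rewrite !subrr N0 mul0r.
  have := IH hnm; move=> h.
  have -> : xs m.+1 - xs n = (xs m.+1 - xs m) + (xs m - xs n) by rewrite addrA subrK.
  apply: le_trans (ND _ _ (MB _ _ (Mxs _) (Mxs _)) (MB _ _ (Mxs _) (Mxs _))) _.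
  apply: le_trans (lerD (step m) h) _.
  rewrite rS; lra.
have rsmall e : 0 < e -> exists n, r n < e.
  move=> e0; have [n hn] := archi_nat (e^-1).
  exists n; rewrite /r exprVn invf_plt ?posrE ?exprn_gt0 //.
  apply: lt_le_trans hn _; apply: le_trans (_ : 1 + 2 *+ n <= _).
    by have := ler0n R n; rewrite -mulr_natr; lra.
  by have := bernoulli_ge (2 : R) n; rewrite (_ : 1 + 2 = 3 :> R); [apply; rewrite ler0n|lra].
have rmono n m : (n <= m)%N -> r m <= r n.
  move=> nm; rewrite /r -(subnK nm) exprD ler_piMl // ?exprn_ge0 ?invr_ge0 //.
  by rewrite exprn_ile1 // ?invr_ge0 // invf_le1 // ler1n.
have [l [Ml hl]] : exists l, M l /\ forall e, 0 < e -> exists N0, forall n, (N0 <= n)%N -> N (xs n - l) < e.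
  apply: Mcompl => // e e0.
  have [n0 hn0] := rsmall e e0; exists n0 => m n hm hn.
  wlog mn : m n hm hn / (n <= m)%N.
    move=> W; have [nm|mn] := leqP n m; first exact: W.
    have -> : xs m - xs n = - (xs n - xs m) by rewrite opprB.
    rewrite NN; last by apply: MB; apply: Mxs.
    by apply: (W n m) => //; apply: ltnW.
  apply: le_lt_trans (cauchy _ _ mn) _.
  apply: le_lt_trans (_ : (r n - r m) / 2 <= r n0) hn0.
  have := r_ge0 m; have := r_ge0 n; have := rmono _ _ hn; lra.
have hl' n : N (l - xs n) <= r n / 2.
  apply/ler_addgt0Pr => e e0; have [N1 hN1] := hl e e0.
  pose m := maxn n N1.
  have -> : l - xs n = (l - xs m) + (xs m - xs n) by rewrite addrA subrK.
  apply: le_trans (ND _ _ (MB _ _ Ml (Mxs _)) (MB _ _ (Mxs _) (Mxs _))) _.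
  rewrite addrC; apply: lerD; last first.
    have -> : l - xs m = - (xs m - l) by rewrite opprB.
    rewrite NN; last by apply: MB; [apply: Mxs|].
    by apply/ltW/hN1/leq_maxr.
  apply: le_trans (cauchy _ _ (leq_maxl _ _)) _.
  have := r_ge0 m; lra.
have lowxs n : r n.+1 * kabs (fi n.+1 (g n.+1).2) <= kabs (fi n.+1 (xs n.+1)).
  have Pi := Pg n.+1.
  have e2 : fi n.+1 (xs n + xi n.+1) - fi n.+1 (xs n - xi n.+1) = emb 2 * fi n.+1 (xi n.+1).
    rewrite /fi fD ?fB // rmorph_nat; ring.
  have h2 : 2 * kabs (fi n.+1 (xi n.+1)) <= kabs (fi n.+1 (xs n + xi n.+1)) + kabs (fi n.+1 (xs n - xi n.+1)).
    have := kabsD S (fi n.+1 (xs n + xi n.+1)) (- fi n.+1 (xs n - xi n.+1)).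
    by rewrite e2 (kabsM S) kabs_emb ger0_norm // (kabsN kabs_emb).
  have -> : r n.+1 * kabs (fi n.+1 (g n.+1).2) = kabs (fi n.+1 (xi n.+1)).
    by rewrite /fi fZ // (kabsM S) kabs_emb ger0_norm.
  rewrite /=; case: ifP => hc.
    apply: le_trans (_ : (kabs (fi n.+1 (xs n + xi n.+1)) + kabs (fi n.+1 (xs n - xi n.+1))) / 2 <= _).
      by rewrite ler_pdivlMr // mulrC.
    by rewrite ler_pdivrMr // mulr2n mulrDr mulr1 lerD.
  apply: le_trans (_ : (kabs (fi n.+1 (xs n + xi n.+1)) + kabs (fi n.+1 (xs n - xi n.+1))) / 2 <= _).
    by rewrite ler_pdivlMr // mulrC.
  move/negbT: hc; rewrite -ltNge => /ltW hc.
  by rewrite ler_pdivrMr // mulr2n mulrDr mulr1 lerD.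
have [B hB] := fpw l Ml.
have lowl n : (4 / 3) ^+ n.+1 / 6 <= B.
  have Pi := Pg n.+1; apply: le_trans (hB _ Pi).
  have Ml' : M (l - xs n.+1) by apply: MB => //; apply: Mxs.
  have nfb := nf_bd _ _ Pi Ml'.
  have t1 := kabsB (f (g n.+1).1 (xs n.+1)) (f (g n.+1).1 l).
  rewrite (kabsBC kabs_emb (f _ (xs n.+1))) -fB // in t1.
  have [_ _ _ h4 h23] := hg n.+1.
  set nn := nf (g n.+1).1 in nfb h4 h23.
  have := lowxs n; rewrite /fi => lx.
  have A1 : r n.+1 * (nn * (2 / 3)) <= r n.+1 * kabs (f (g n.+1).1 (g n.+1).2).
    by rewrite ler_wpM2l //; apply: ltW.
  have A2 : kabs (f (g n.+1).1 (l - xs n.+1)) <= nn * (r n.+1 / 2).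
    by apply: le_trans nfb _; apply: ler_wpM2l; [apply: nf_ge0|apply: hl'].
  have A3 : 4 ^+ n.+1 * r n.+1 <= nn * r n.+1 by rewrite ler_wpM2r.
  have -> : (4 / 3) ^+ n.+1 = 4 ^+ n.+1 * r n.+1 by rewrite /r -exprMn.
  move: A1 A2 A3 lx t1; set a := nn * r n.+1; set q := 4 ^+ n.+1 * r n.+1.
  rewrite !mulrA (mulrC (r n.+1) nn) -/a; lra.
have [n hn] := archi_nat (18 * B).
have h1 := lowl n.
have h2 := bernoulli_ge (3^-1 : R) n.+1.
rewrite (_ : 1 + 3^-1 = 4 / 3 :> R) in h2; last by lra.
have h3 : 0 <= (3^-1 : R) by rewrite invr_ge0.
have e : 3^-1 *+ n.+1 = 3^-1 * n%:R + 3^-1 :> R by rewrite mulrSr mulr_natr.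
move: (h2 h3) h1 hn; rewrite e.
have := ler0n R n; lra.
Qed.
End UBP.


Section Dual.
Context {R : realType} {S : scal R}.
Local Notation K := (sK S).
Local Notation kabs := (kabs S).
Context {emb : {rmorphism R -> K}}.
Hypothesis kabs_emb : forall r, kabs (emb r) = `|r|.
Hypothesis rot : forall z : K, exists l, kabs l = 1 /\ l * z = emb (kabs z).
Hypothesis kcompl : forall u : nat -> K,
  (forall e, 0 < e -> exists N, forall m n, (N <= m)%N -> (N <= n)%N -> kabs (u m - u n) < e) ->
  exists l, forall e, 0 < e -> exists N, forall n, (N <= n)%N -> kabs (u n - l) < e.

Variable F : nspace S.
Hypothesis nF : is_norm F.

Lemma dual_prop (f : dual F) : linear (sval f : F -> K^o) /\
  exists C : R, forall x, kabs (fapp f x) <= C * nrm F x.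
Proof. by have /asboolP := valP f. Qed.

Lemma fappL (f : dual F) a x y : fapp f (a *: x + y) = a * fapp f x + fapp f y.
Proof. have [lf _] := dual_prop f. by rewrite /fapp lf. Qed.

Lemma fappD (f : dual F) x y : fapp f (x + y) = fapp f x + fapp f y.
Proof. by have := fappL f 1 x y; rewrite scale1r mul1r. Qed.

Lemma fapp0 (f : dual F) : fapp f 0 = 0.
Proof.
have h := fappD f 0 0; rewrite addr0 in h.
by apply: (@addrI _ (fapp f 0)); rewrite addr0 -h.
Qed.

Lemma fappZ (f : dual F) a x : fapp f (a *: x) = a * fapp f x.
Proof. by rewrite -[a *: x]addr0 fappL fapp0 addr0. Qed.

Lemma fappN (f : dual F) x : fapp f (- x) = - fapp f x.
Proof. by rewrite -scaleN1r fappZ mulN1r. Qed.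

Lemma fappB (f : dual F) x y : fapp f (x - y) = fapp f x - fapp f y.
Proof. by rewrite fappD fappN. Qed.

Lemma fapp_lin (a : K) (f g : dual F) x : fapp (a *: f + g) x = a * fapp f x + fapp g x.
Proof. by []. Qed.

Lemma fapp_sub (f g : dual F) x : fapp (f - g) x = fapp f x - fapp g x.
Proof. by []. Qed.

Lemma fappZl (a : K) (f : dual F) x : fapp (a *: f) x = a * fapp f x.
Proof. by []. Qed.

Definition dset (f : dual F) :=
  ((fun x => kabs (fapp f x)) @` [set x : F | nrm F x <= 1])%classic.

Lemma dhas_sup (f : dual F) : has_sup (dset f).
Proof.
split; first by exists (kabs (fapp f 0)), 0 => //=; rewrite (nrm0 nF).
have [_ [C hC]] := dual_prop f; exists (Num.max C 0) => _ [x x1 <-].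
apply: le_trans (hC x) _.
apply: le_trans (_ : Num.max C 0 * nrm F x <= _).
  by apply: ler_wpM2r; [exact: (nrm_ge0 kabs_emb nF)|rewrite le_max lexx].
by rewrite -[X in _ <= X]mulr1 ler_wpM2l // le_max lexx orbT.
Qed.

Lemma dnorm_ub (f : dual F) x : nrm F x <= 1 -> kabs (fapp f x) <= nrm (dual F) f.
Proof. by move=> x1; apply: sup_upper_bound (dhas_sup f) _ _; exists x. Qed.

Lemma dnorm_ge0 (f : dual F) : 0 <= nrm (dual F) f.
Proof. by apply: le_trans (dnorm_ub f 0 _); rewrite ?(kabs_ge0 S) ?(nrm0 nF). Qed.

Lemma dnorm_le (f : dual F) c : (forall x, nrm F x <= 1 -> kabs (fapp f x) <= c) ->
  nrm (dual F) f <= c.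
Proof.
move=> h; apply: ge_sup; first by exists (kabs (fapp f 0)), 0 => //=; rewrite (nrm0 nF).
by move=> _ [x x1 <-]; apply: h.
Qed.

Lemma dnorm_bd (f : dual F) x : kabs (fapp f x) <= nrm (dual F) f * nrm F x.
Proof.
have [x0|xp] := eqVneq (nrm F x) 0.
  by rewrite x0 mulr0 (nrm_eq0 nF _ x0) fapp0 (kabs0 S).
have xp' : 0 < nrm F x by rewrite lt_def xp (nrm_ge0 kabs_emb nF).
have := dnorm_ub f (emb (nrm F x)^-1 *: x).
rewrite (nrmZ nF) kabs_emb ger0_norm ?invr_ge0 ?(ltW xp') // mulVf // lexx => /(_ isT).
rewrite fappZ (kabsM S) kabs_emb ger0_norm ?invr_ge0 ?(ltW xp') //.
by rewrite mulrC ler_pdivrMr.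
Qed.

Lemma banach_dual : banach F -> banach (dual F).
Proof.
move=> [_ cF]; split.
  split.
  - move=> f; split => [f0|->].
      apply: val_inj; apply: funext => x /=.
      apply: (kabs_eq0 rot); apply/eqP; rewrite eq_le (kabs_ge0 S) andbT.
      by have := dnorm_bd f x; rewrite f0 mul0r.
    apply/eqP; rewrite eq_le dnorm_ge0 andbT; apply: dnorm_le => x _.
    by rewrite /fapp /= (kabs0 S).
  - move=> a f; apply/eqP; rewrite eq_le; apply/andP; split.
      apply: dnorm_le => x x1; rewrite fappZl (kabsM S) ler_wpM2l ?(kabs_ge0 S) //.
      exact: dnorm_ub.
    have [->|a0] := eqVneq a 0; first by rewrite (kabs0 S) mul0r dnorm_ge0.
    have ka : 0 < kabs a.
      by rewrite lt_def (kabs_ge0 S) andbT; apply/eqP => /(kabs_eq0 rot); apply/eqP.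
    rewrite mulrC -ler_pdivlMr //; apply: dnorm_le => x x1.
    rewrite ler_pdivlMr // mulrC -(kabsM S) -fappZl; exact: dnorm_ub.
  - move=> f g; apply: dnorm_le => x x1.
    apply: le_trans (kabsD S _ _) _; apply: lerD; exact: dnorm_ub.
move=> u cu.
have pc x : exists l, forall e, 0 < e -> exists N, forall n, (N <= n)%N -> kabs (fapp (u n) x - l) < e.
  apply: kcompl => e e0.
  have e1 : 0 < e / (nrm F x + 1).
    by apply: divr_gt0 => //; apply: ltr_wpDl (nrm_ge0 kabs_emb nF x) _.
  have [N hN] := cu _ e1; exists N => m n hm hn.
  rewrite -fapp_sub; apply: le_lt_trans (dnorm_bd _ _) _.
  apply: le_lt_trans (_ : _ <= e / (nrm F x + 1) * nrm F x) _.
    by apply: ler_wpM2r; [exact: (nrm_ge0 kabs_emb nF)|apply: ltW; apply: hN].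
  rewrite mulrAC ltr_pdivrMr ?ltr_wpDl ?(nrm_ge0 kabs_emb nF) //.
  by rewrite ltr_pM2l // ltrDl.
have [L hL] := choice pc.
have uniq (s : nat -> K) l1 l2 : (forall e, 0 < e -> exists N, forall n, (N <= n)%N -> kabs (s n - l1) < e) ->
    (forall e, 0 < e -> exists N, forall n, (N <= n)%N -> kabs (s n - l2) < e) -> l1 = l2.
  move=> h1 h2; apply/eqP; rewrite -subr_eq0; apply/eqP; apply: (kabs_eq0 rot).
  apply/eqP; rewrite eq_le (kabs_ge0 S) andbT; apply/ler_addgt0Pr => e e0.
  have e2 : 0 < e / 2 by rewrite divr_gt0.
  have [N1 hN1] := h1 _ e2; have [N2 hN2] := h2 _ e2.
  have := hN1 (maxn N1 N2) (leq_maxl _ _); have := hN2 (maxn N1 N2) (leq_maxr _ _).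
  set z := s _ => a b; rewrite add0r.
  have -> : l1 - l2 = (z - l2) - (z - l1) by ring.
  apply: le_trans (kabsD S _ _) _; rewrite (kabsN kabs_emb); lra.
have Llin : linear (L : F -> K^o).
  move=> a x y; apply: (uniq (fun n => fapp (u n) (a *: x + y))); first exact: hL.
  move=> e e0; have ka : 0 < kabs a + 1 by apply: ltr_wpDl (kabs_ge0 S a) _.
  have e2 : 0 < e / 2 / (kabs a + 1) by rewrite !divr_gt0.
  have [N1 hN1] := hL x _ e2; have [N2 hN2] := hL y _ (divr_gt0 e0 (ltr0n _ 2)).
  exists (maxn N1 N2) => n hn.
  rewrite fappL /= (_ : _ - _ = a * (fapp (u n) x - L x) + (fapp (u n) y - L y)); last first.
    by rewrite /GRing.scale /=; ring.
  apply: le_lt_trans (kabsD S _ _) _; rewrite (kabsM S).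
  have h1 := hN1 n (leq_trans (leq_maxl _ _) hn); have h2 := hN2 n (leq_trans (leq_maxr _ _) hn).
  have h3 : kabs a * kabs (fapp (u n) x - L x) <= e / 2.
    apply: le_trans (_ : (kabs a + 1) * (e / 2 / (kabs a + 1)) <= _); last by rewrite mulrC divfK ?gt_eqF.
    apply: ler_pM => //; rewrite ?(kabs_ge0 S) ?lerDl //; exact: ltW.
  lra.
have [N1 hN1] := cu 1 ltr01.
have Lbd : exists C : R, forall x, kabs (L x) <= C * nrm F x.
  exists (nrm (dual F) (u N1) + 1) => x.
  apply/ler_addgt0Pr => e e0.
  have [N2 hN2] := hL x e e0; pose m := maxn N1 N2.
  have h1 := hN2 m (leq_maxr _ _).
  have h2 := dnorm_bd (u m - u N1) x.
  have h3 : nrm (dual F) (u m - u N1) <= 1 by apply/ltW/hN1 => //; apply: leq_maxl.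
  have h4 := dnorm_bd (u N1) x.
  have h5 : kabs (L x) <= kabs (L x - fapp (u m) x) + kabs (fapp (u m - u N1) x) + kabs (fapp (u N1) x).
    rewrite fapp_sub {1}(_ : L x = (L x - fapp (u m) x) + (fapp (u m) x - fapp (u N1) x) + fapp (u N1) x); last by ring.
    by apply: le_trans (kabsD S _ _) _; apply: lerD (kabsD S _ _) (lexx _).
  rewrite (kabsBC kabs_emb) in h5.
  have h6 : nrm (dual F) (u m - u N1) * nrm F x <= nrm F x.
    by rewrite -[X in _ <= X]mul1r ler_wpM2r // (nrm_ge0 kabs_emb nF).
  rewrite mulrDl mul1r; lra.
have Lin : (L : F -> K^o) \in bdlin F by apply/asboolP; split.
exists (exist (fun f : F -> K^o => f \in bdlin F) L Lin : dual F) => e e0.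
have e2 : 0 < e / 2 by rewrite divr_gt0.
have [N hN] := cu _ e2; exists N => n hn.
apply: le_lt_trans (_ : e / 2 < e); last by lra.
apply: dnorm_le => x x1; rewrite fapp_sub /fapp /=.
apply/ler_addgt0Pr => d d0; have [N2 hN2] := hL x d d0.
pose m := maxn N N2.
have h1 := hN2 m (leq_maxr _ _).
have h2 := dnorm_bd (u n - u m) x.
have h3 : nrm (dual F) (u n - u m) < e / 2 by apply: hN => //; apply: leq_maxl.
have h4 : nrm (dual F) (u n - u m) * nrm F x <= e / 2.
  apply: le_trans (_ : nrm (dual F) (u n - u m) * 1 <= _); first by rewrite ler_wpM2l ?dnorm_ge0.
  by rewrite mulr1 ltW.
rewrite fapp_sub in h2.
have -> : sval (u n) x - L x = (fapp (u n) x - fapp (u m) x) + (fapp (u m) x - L x) by rewrite /fapp; ring.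
apply: le_trans (kabsD S _ _) _; lra.
Qed.

End Dual.


Lemma real_complete {R : realType} (u : nat -> R) :
  (forall e, 0 < e -> exists N, forall m n, (N <= m)%N -> (N <= n)%N -> `|u m - u n| < e) ->
  exists l, forall e, 0 < e -> exists N, forall n, (N <= n)%N -> `|u n - l| < e.
Proof.
move=> cu.
pose A := [set x : R | exists N, forall n, (N <= n)%N -> x <= u n]%classic.
have [N1 hN1] := cu 1 ltr01.
have hA : has_sup A.
  split; first by exists (u N1 - 1), N1 => n hn; have := hN1 n N1 hn (leqnn _); rewrite ltr_norml; lra.
  exists (u N1 + 1) => x [N hN]; have := hN (maxn N N1) (leq_maxl _ _).
  have := hN1 (maxn N N1) N1 (leq_maxr _ _) (leqnn _); rewrite ltr_norml; lra.
exists (sup A) => e e0.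
have e2 : 0 < e / 2 by rewrite divr_gt0.
have [N hN] := cu _ e2; exists N => n hn.
have l1 : u N - e / 2 <= sup A.
  apply: sup_upper_bound hA _ _; exists N => m hm.
  have := hN m N hm (leqnn _); rewrite ltr_norml; lra.
have l2 : sup A <= u N + e / 2.
  apply: ge_sup; first by case: hA.
  move=> x [M hM]; have := hM (maxn M N) (leq_maxl _ _).
  have := hN (maxn M N) N (leq_maxr _ _) (leqnn _); rewrite ltr_norml; lra.
have := hN n N hn (leqnn _); rewrite !ltr_norml; lra.
Qed.

Definition kcomplete {R : realType} (S : scal R) :=
  forall u : nat -> S,
  (forall e, 0 < e -> exists N, forall m n, (N <= m)%N -> (N <= n)%N -> kabs S (u m - u n) < e) ->
  exists l, forall e, 0 < e -> exists N, forall n, (N <= n)%N -> kabs S (u n - l) < e.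

Lemma realS_facts {R : realType} : exists emb : {rmorphism R -> sK (realS R)},
  [/\ forall r, kabs (realS R) (emb r) = `|r|,
      forall z, exists l, kabs (realS R) l = 1 /\ l * z = emb (kabs (realS R) z)
    & kcomplete (realS R)].
Proof.
exists (idfun : {rmorphism R -> R}); split => //.
  move=> z /=; have [z0|z0] := leP 0 z.
    by exists 1; rewrite normr1 mul1r ger0_norm.
  by exists (-1); rewrite normrN normr1 mulN1r ltr0_norm.
exact: real_complete.
Qed.

Lemma normc_def' {R : realType} (a b : R) : Normc.normc (a +i* b)%C = Num.sqrt (a ^+ 2 + b ^+ 2).
Proof. by []. Qed.

Lemma complexS_facts {R : realType} : exists emb : {rmorphism R -> sK (complexS R)},
  [/\ forall r, kabs (complexS R) (emb r) = `|r|,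
      forall z, exists l, kabs (complexS R) l = 1 /\ l * z = emb (kabs (complexS R) z)
    & kcomplete (complexS R)].
Proof.
exists (real_complex R : {rmorphism R -> R[i]}); split => //=.
- by move=> r; rewrite expr0n /= addr0 sqrtr_sqr.
- case=> a b /=.
  set n := Num.sqrt _.
  have [n0|n0] := eqVneq n 0.
    exists 1; split; first by rewrite (@Normc.normc1 R).
    rewrite mul1r n0; move/eqP: n0; rewrite /n sqrtr_eq0 => h.
    have ha : a ^+ 2 = 0 by apply/eqP; rewrite eq_le sqr_ge0 andbT; apply: le_trans h; rewrite lerDl sqr_ge0.
    have hb : b ^+ 2 = 0 by apply/eqP; rewrite eq_le sqr_ge0 andbT; apply: le_trans h; rewrite lerDr sqr_ge0.
    by move/eqP: ha; rewrite sqrf_eq0 => /eqP ->; move/eqP: hb; rewrite sqrf_eq0 => /eqP ->.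
  have s0 : 0 <= a ^+ 2 + b ^+ 2 by rewrite addr_ge0 ?sqr_ge0.
  have nn : n ^+ 2 = a ^+ 2 + b ^+ 2 by rewrite sqr_sqrtr.
  exists ((a / n) +i* (- b / n))%C; split.
    rewrite normc_def' -[RHS]sqrtr1; congr Num.sqrt.
    by rewrite !expr_div_n sqrrN -mulrDl -nn divff // sqrf_eq0.
  apply/eqP; rewrite eq_complex /=; apply/andP; split; apply/eqP; last by field.
  have -> : a / n * a - - b / n * b = (a ^+ 2 + b ^+ 2) / n by field.
  by rewrite -nn expr2 mulfK.
- move=> u cu.
  have reb (w : R[i]) : `|complex.Re w| <= Normc.normc w.
    by case: w => a b; rewrite normc_def' /= -sqrtr_sqr; apply: ler_wsqrtr; rewrite lerDl sqr_ge0.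
  have imb (w : R[i]) : `|complex.Im w| <= Normc.normc w.
    by case: w => a b; rewrite normc_def' /= -sqrtr_sqr; apply: ler_wsqrtr; rewrite lerDr sqr_ge0.
  have nb (a b : R) : Normc.normc (a +i* b)%C <= `|a| + `|b|.
    rewrite normc_def' -(ger0_norm (addr_ge0 (normr_ge0 a) (normr_ge0 b))) -sqrtr_sqr; apply: ler_wsqrtr.
    by rewrite sqrrD !real_normK ?num_real // -addrA lerD2l lerDr mulrn_wge0 // mulr_ge0.
  have [lr hr] : exists l, forall e, 0 < e -> exists N, forall n, (N <= n)%N -> `|complex.Re (u n) - l| < e.
    apply: real_complete => e e0; have [N hN] := cu e e0; exists N => m n hm hn.
    by apply: le_lt_trans (hN m n hm hn); rewrite -raddfB; apply: reb.
  have [li hi] : exists l, forall e, 0 < e -> exists N, forall n, (N <= n)%N -> `|complex.Im (u n) - l| < e.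
    apply: real_complete => e e0; have [N hN] := cu e e0; exists N => m n hm hn.
    by apply: le_lt_trans (hN m n hm hn); rewrite -raddfB; apply: imb.
  exists (lr +i* li)%C => e e0.
  have e2 : 0 < e / 2 by rewrite divr_gt0.
  have [N1 h1] := hr _ e2; have [N2 h2] := hi _ e2.
  exists (maxn N1 N2) => n hn.
  have := h1 n (leq_trans (leq_maxl _ _) hn); have := h2 n (leq_trans (leq_maxr _ _) hn).
  case: (u n) => a b /= ha hb.
  apply: le_lt_trans (nb _ _) _; lra.
Qed.

Lemma scal_facts {R : realType} (S : scal R) : S = realS R \/ S = complexS R ->
  exists emb : {rmorphism R -> sK S},
  [/\ forall r, kabs S (emb r) = `|r|,
      forall z, exists l, kabs S l = 1 /\ l * z = emb (kabs S z)
    & kcomplete S].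
Proof. by case=> ->; [exact: realS_facts|exact: complexS_facts]. Qed.


Section SC.
Context {R : realType} {S : scal R}.
Local Notation K := (sK S).
Local Notation kabs := (kabs S).
Context {emb : {rmorphism R -> K}}.
Hypothesis kabs_emb : forall r, kabs (emb r) = `|r|.

Context {Z : seqclass S} {W : nspace S}.
Hypothesis sZ : is_seqclass Z.
Hypothesis bW : banach W.

Definition zN (x : nat -> W) : R := fine (sc_norm Z W x).

Lemma zmem0 : sc_mem Z W 0.
Proof. by case: (sZ W bW) => -[]. Qed.

Lemma zmemL a {x y} : sc_mem Z W x -> sc_mem Z W y -> sc_mem Z W (a *: x + y).
Proof. by case: (sZ W bW) => -[_ h] *; apply: h. Qed.

Lemma zmemD {x y} : sc_mem Z W x -> sc_mem Z W y -> sc_mem Z W (x + y).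
Proof. by move=> *; rewrite -[x]scale1r; apply: zmemL. Qed.

Lemma zmemZ a {x} : sc_mem Z W x -> sc_mem Z W (a *: x).
Proof. by move=> *; rewrite -[_ *: _]addr0; apply: zmemL => //; apply: zmem0. Qed.

Lemma zmemB {x y} : sc_mem Z W x -> sc_mem Z W y -> sc_mem Z W (x - y).
Proof. by move=> *; apply: zmemD => //; rewrite -scaleN1r; apply: zmemZ. Qed.

Lemma zc00 x : (exists n, forall j, (n <= j)%N -> x j = 0) -> sc_mem Z W x.
Proof. by case: (sZ W bW) => _ h *; apply: h. Qed.

Lemma zfin {x} : sc_mem Z W x -> sc_norm Z W x \is a fin_num.
Proof. by case: (sZ W bW) => _ _ [h _ _ _] _ _; apply: h. Qed.

Lemma zNE {x} : sc_mem Z W x -> sc_norm Z W x = (zN x)%:E.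
Proof. by move=> h; rewrite /zN fineK //; apply: zfin. Qed.

Lemma zn0 {x} : sc_mem Z W x -> (sc_norm Z W x = 0%E <-> x = 0).
Proof. by case: (sZ W bW) => _ _ [_ h _ _] _ _; apply: h. Qed.

Lemma znZ a {x} : sc_mem Z W x -> sc_norm Z W (a *: x) = ((kabs a)%:E * sc_norm Z W x)%E.
Proof. by case: (sZ W bW) => _ _ [_ _ h _] _ _; apply: h. Qed.

Lemma znD {x y} : sc_mem Z W x -> sc_mem Z W y ->
  (sc_norm Z W (x + y)%R <= sc_norm Z W x + sc_norm Z W y)%E.
Proof. by case: (sZ W bW) => _ _ [_ _ _ h] _ _; apply: h. Qed.

Lemma zsup {x} : sc_mem Z W x -> forall j, ((nrm W (x j))%:E <= sc_norm Z W x)%E.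
Proof. by case: (sZ W bW) => _ _ _ [_ h] _; apply: h. Qed.

Lemma zcompl {w : nat -> nat -> W} : (forall n, sc_mem Z W (w n)) ->
  (forall e : R, (0 < e)%R -> exists N, forall m n, (N <= m)%N -> (N <= n)%N ->
            (sc_norm Z W (w m - w n)%R < e%:E)%E) ->
  exists l, sc_mem Z W l /\
    forall e : R, (0 < e)%R -> exists N, forall n, (N <= n)%N ->
      (sc_norm Z W (w n - l)%R < e%:E)%E.
Proof. by case: (sZ W bW) => _ _ _ [h _] _; apply: h. Qed.

Lemma zNZ a {x} : sc_mem Z W x -> zN (a *: x) = kabs a * zN x.
Proof. by move=> h; rewrite /zN znZ // zNE // -EFinM. Qed.

Lemma zND {x y} : sc_mem Z W x -> sc_mem Z W y -> zN (x + y) <= zN x + zN y.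
Proof.
move=> hx hy; have := znD hx hy; rewrite (zNE (zmemD hx hy)) (zNE hx) (zNE hy).
by rewrite -EFinD lee_fin.
Qed.

Lemma zN_sup {x} : sc_mem Z W x -> forall j, nrm W (x j) <= zN x.
Proof. by move=> h j; have := zsup h j; rewrite zNE // lee_fin. Qed.

Lemma zN_ge0 {x} : sc_mem Z W x -> 0 <= zN x.
Proof. by move=> h; apply: le_trans (zN_sup h 0%N); apply: (nrm_ge0 kabs_emb bW.1). Qed.

Lemma zN0 : zN 0 = 0.
Proof. by rewrite /zN (proj2 (zn0 zmem0)). Qed.

Lemma zN_eq0 {x} : sc_mem Z W x -> zN x = 0 -> x = 0.
Proof. by move=> h h0; apply/(zn0 h); rewrite zNE // h0. Qed.

Lemma zN_compl (u : nat -> nat -> W) : (forall n, sc_mem Z W (u n)) ->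
  (forall e, 0 < e -> exists N0, forall m n, (N0 <= m)%N -> (N0 <= n)%N -> zN (u m - u n) < e) ->
  exists l, sc_mem Z W l /\ forall e, 0 < e -> exists N0, forall n, (N0 <= n)%N -> zN (u n - l) < e.
Proof.
move=> hu cu; have [|l [hl cl]] := zcompl hu.
  move=> e e0; have [N hN] := cu e e0; exists N => m n hm hn.
  by rewrite (zNE (zmemB (hu m) (hu n))) lte_fin; apply: hN.
exists l; split => // e e0; have [N hN] := cl e e0; exists N => n hn.
by have := hN n hn; rewrite (zNE (zmemB (hu n) hl)) lte_fin.
Qed.

End SC.


Lemma series_le {R : realType} (f : nat -> R) (M : \bar R) : (forall j, 0 <= f j) ->
  (forall n, ((\sum_(j < n) f j)%:E <= M)%E) -> (\sum_(0 <= j <oo) (f j)%:E <= M)%E.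
Proof.
move=> f0 hM.
have := @ereal_nondecreasing_series R (fun j => (f j)%:E) xpredT 0%N (fun n _ _ => f0 n).
move/ereal_nondecreasing_cvgn/cvg_lim => -> //.
apply: ge_ereal_sup => _ [n _ <-] /=.
by rewrite sumEFin big_mkord; apply: hM.
Qed.

Lemma series_ge {R : realType} (f : nat -> R) n : (forall j, 0 <= f j) ->
  ((\sum_(j < n) f j)%:E <= \sum_(0 <= j <oo) (f j)%:E)%E.
Proof.
move=> f0; have := @nneseries_lim_ge R (fun j => (f j)%:E) xpredT 0%N n (fun n _ _ => f0 n).
by rewrite sumEFin big_mkord.
Qed.

Lemma conv_bounded {R : realType} {S : scal R} (s : nat -> sK S) l :
  (forall e, 0 < e -> exists N, forall n, (N <= n)%N -> kabs S (s n - l) < e) ->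
  exists B, forall n, kabs S (s n) <= B.
Proof.
move=> h; have [N hN] := h 1 ltr01.
exists (kabs S l + 1 + \sum_(k < N) kabs S (s k)) => n.
have sge0 : 0 <= \sum_(k < N) kabs S (s k) by apply: sumr_ge0 => k _; apply: kabs_ge0.
have [nN|nN] := leqP N n.
  have := hN n nN; have := kabsD S (s n - l) l; rewrite subrK.
  have := kabs_ge0 S l; lra.
have : kabs S (s n) <= \sum_(k < N) kabs S (s k).
  rewrite (bigD1 (Ordinal nN)) //= lerDl; apply: sumr_ge0 => k _; apply: kabs_ge0.
have := kabs_ge0 S l; lra.
Qed.

Lemma trunc_le {R : realType} {S : scal R} {Z : seqclass S} {W : nspace S} :
  is_seqclass Z -> banach W -> (fin_determined Z \/ fin_dominated Z) ->
  forall x k, sc_mem Z W x -> (sc_norm Z W (Defs.trunc k x) <= sc_norm Z W x)%E.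
Proof.
move=> sZ bW hZ x k hx.
have htr : sc_mem Z W (Defs.trunc k x).
  by apply: (zc00 sZ bW); exists k => j hj; rewrite /Defs.trunc ltnNge hj.
case: hZ => [hd|[Z' [sZ' [hd' hc]]]].
  by rewrite ((hd W bW x).2 hx); apply: ereal_sup_ubound; exists k.
have [[sub _] _] := hc W bW.
have [hx' ->] := sub x hx; have [_ ->] := sub _ htr.
by rewrite ((hd' W bW x).2 hx'); apply: ereal_sup_ubound; exists k.
Qed.

Lemma zN_trunc {R : realType} {S : scal R} {Z : seqclass S} {W : nspace S} :
  is_seqclass Z -> banach W -> (fin_determined Z \/ fin_dominated Z) ->
  forall x k, sc_mem Z W x -> zN (Z := Z) (Defs.trunc k x) <= zN (Z := Z) x.
Proof.
move=> sZ bW hZ x k hx.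
have htr : sc_mem Z W (Defs.trunc k x).
  by apply: (zc00 sZ bW); exists k => j hj; rewrite /Defs.trunc ltnNge hj.
by have := trunc_le sZ bW hZ x k hx; rewrite (zNE sZ bW hx) (zNE sZ bW htr) lee_fin.
Qed.

Section Main.
Context {R : realType} {S : scal R}.
Local Notation K := (sK S).
Local Notation kabs := (kabs S).
Context {emb : {rmorphism R -> K}}.
Hypothesis kabs_emb : forall r, kabs (emb r) = `|r|.
Hypothesis rot : forall z : K, exists l, kabs l = 1 /\ l * z = emb (kabs z).
Hypothesis kcompl : kcomplete S.

Variables (X Y : seqclass S).
Hypotheses (sX : is_seqclass X) (sY : is_seqclass Y) (scY : spherically_complete Y).
Variables (E F : nspace S).
Hypotheses (hE : banach E) (hF : banach F).
Variable T : E -> F.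
Hypothesis hT : bounded_op T.

Local Notation G := (dual F).
Lemma bG : banach G.
Proof. exact: (banach_dual kabs_emb rot kcompl F hF.1 hF). Qed.

Local Notation nX := (@zN _ _ X E).
Local Notation nY := (@zN _ _ Y G).

Definition term (x : nat -> E) (p : nat -> G) j := fapp (p j) (T (x j)).
Definition psum x p n := \sum_(j < n) term x p j.
Definition asum x p n := \sum_(j < n) kabs (term x p j).

Lemma TL a x y : T (a *: x + y) = a *: T x + T y.
Proof. by case: hT => l _; rewrite l. Qed.

Lemma TD x y : T (x + y) = T x + T y.
Proof. by rewrite -[x]scale1r TL !scale1r. Qed.

Lemma T0 : T 0 = 0.
Proof. have h := TD 0 0; rewrite addr0 in h; by apply: (@addrI _ (T 0)); rewrite addr0 -h. Qed.

Lemma TZ a x : T (a *: x) = a *: T x.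
Proof. by rewrite -[a *: x]addr0 TL T0 addr0. Qed.

Lemma Tbd : exists CT, 0 <= CT /\ forall x, nrm F (T x) <= CT * nrm E x.
Proof.
case: hT => _ [C hC]; exists (Num.max C 0); split; first by rewrite le_max lexx orbT.
move=> x; apply: le_trans (hC x) _; apply: ler_wpM2r; first exact: (nrm_ge0 kabs_emb hE.1).
by rewrite le_max lexx.
Qed.

Lemma asum_ge0 x p n : 0 <= asum x p n.
Proof. by apply: sumr_ge0 => j _; apply: kabs_ge0. Qed.

Lemma psum_le x p n : kabs (psum x p n) <= asum x p n.
Proof. exact: kabs_sum. Qed.

Lemma psum_linx p n a x y : psum (a *: x + y) p n = a * psum x p n + psum y p n.
Proof.
rewrite /psum /term mulr_sumr -big_split /=; apply: eq_bigr => j _.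
by rewrite /= TL (fappL F).
Qed.

Lemma psum_linp x n a p q : psum x (a *: p + q) n = a * psum x p n + psum x q n.
Proof.
by rewrite /psum /term mulr_sumr -big_split /=; apply: eq_bigr => j _.
Qed.

Lemma rotf_ex : exists rf : K -> K, forall z, kabs (rf z) = 1 /\ rf z * z = emb (kabs z).
Proof. by have [rf hrf] := choice rot; exists rf. Qed.

Lemma rotated x p n : exists p' : nat -> G, (forall j, exists l, kabs l = 1 /\ p' j = l *: p j) /\
  psum x p' n = emb (asum x p n).
Proof.
have [rf hrf] := rotf_ex.
exists (fun j => rf (term x p j) *: p j); split; first by move=> j; exists (rf (term x p j)); split => //; case: (hrf (term x p j)).
rewrite /psum /asum rmorph_sum; apply: eq_bigr => j _.
by rewrite {1}/term (fappZl F) (proj2 (hrf _)).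
Qed.


Lemma term_bd x p j : kabs (term x p j) <= nrm G (p j) * nrm F (T (x j)).
Proof. exact: (dnorm_bd kabs_emb F hF.1). Qed.

Lemma fin_bound : summing X (dual_class Y) T -> exists C, (0 <= C) /\ (forall x, sc_mem X E x -> nX x <= 1 -> forall p, sc_mem Y G p -> nY p <= 1 ->
  forall n, asum x p n <= C).
Proof.
move=> hs.
have [CT [CT0 hCT]] := Tbd.
have conv x p : sc_mem X E x -> sc_mem Y G p -> exists B, forall n, kabs (psum x p n) <= B.
  by move=> hx hp; have [l hl] := hs x hx p hp; have [B hB] := conv_bounded (fun n => psum x p n) l hl; exists B => n; apply: hB.
have st1 p : sc_mem Y G p -> exists Cp, forall n, True -> forall x, sc_mem X E x ->
    kabs (psum x p n) <= Cp * nX x.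
  move=> hp.
  apply: (ubp kabs_emb rot _ (sc_mem X E) nX nat (fun _ => True) (fun n x => psum x p n)).
  - exact: (zmem0 sX hE).
  - by move=> a x y hx hy; apply: (zmemL sX hE).
  - by move=> a x hx; apply: (zNZ sX hE).
  - by move=> x y hx hy; apply: (zND sX hE).
  - by move=> u hu cu; apply: (zN_compl sX hE).
  - by move=> n _ a x y hx hy; apply: psum_linx.
  - move=> n _; exists (\sum_(j < n) nrm G (p j) * CT) => x hx.
    apply: le_trans (psum_le _ _ _) _; rewrite /asum mulr_suml; apply: ler_sum => j _.
    apply: le_trans (term_bd _ _ _) _; rewrite -mulrA; apply: ler_wpM2l.
      exact: (dnorm_ge0 kabs_emb F hF.1).
    apply: le_trans (hCT _) _; apply: ler_wpM2l => //; exact: (zN_sup sX hE).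
  - by move=> x hx; have [B hB] := conv x p hx hp; exists B.
have st2 x : sc_mem X E x -> exists Cx, forall n, True -> forall p, sc_mem Y G p ->
    kabs (psum x p n) <= Cx * nY p.
  move=> hx.
  apply: (ubp kabs_emb rot _ (sc_mem Y G) nY nat (fun _ => True) (fun n p => psum x p n)).
  - exact: (zmem0 sY bG).
  - by move=> a p q hp hq; apply: (zmemL sY bG).
  - by move=> a p hp; apply: (zNZ sY bG).
  - by move=> p q hp hq; apply: (zND sY bG).
  - by move=> u hu cu; apply: (zN_compl sY bG).
  - by move=> n _ a p q hp hq; apply: psum_linp.
  - move=> n _; exists (\sum_(j < n) nrm F (T (x j))) => p hp.
    apply: le_trans (psum_le _ _ _) _; rewrite /asum mulr_suml; apply: ler_sum => j _.
    apply: le_trans (term_bd _ _ _) _; rewrite mulrC; apply: ler_wpM2l.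
      exact: (nrm_ge0 kabs_emb hF.1).
    exact: (zN_sup sY bG).
  - by move=> p hp; have [B hB] := conv x p hx hp; exists B.
have [C0 hC0] : exists C0, forall i : (nat -> G) * nat, sc_mem Y G i.1 /\ nY i.1 <= 1 ->
    forall x, sc_mem X E x -> kabs (psum x i.1 i.2) <= C0 * nX x.
  apply: (ubp kabs_emb rot _ (sc_mem X E) nX _ (fun i : (nat -> G) * nat => sc_mem Y G i.1 /\ nY i.1 <= 1)
     (fun i x => psum x i.1 i.2)).
  - exact: (zmem0 sX hE).
  - by move=> a x y hx hy; apply: (zmemL sX hE).
  - by move=> a x hx; apply: (zNZ sX hE).
  - by move=> x y hx hy; apply: (zND sX hE).
  - by move=> u hu cu; apply: (zN_compl sX hE).
  - by move=> i _ a x y hx hy; apply: psum_linx.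
  - by move=> [p n] [hp _]; have [Cp hCp] := st1 p hp; exists Cp => x hx; apply: hCp.
  - move=> x hx; have [Cx hCx] := st2 x hx; exists (Num.max Cx 0) => -[p n] [hp hp1] /=.
    apply: le_trans (hCx n I p hp) _.
    apply: le_trans (_ : Num.max Cx 0 * nY p <= _).
      by apply: ler_wpM2r; [exact: (zN_ge0 kabs_emb sY bG)|rewrite le_max lexx].
    by rewrite -[X in _ <= X]mulr1 ler_wpM2l // le_max lexx orbT.
exists (Num.max C0 0); split; first by rewrite le_max lexx orbT.
move=> x hx hx1 p hp hp1 n.
have [p' [hp' ep']] := rotated x p n.
have [l hl] := choice hp'.
have [mp' np'] := scY G bG p l hp (fun j => (hl j).1).
have ep : (fun j => l j *: p j) = p' by apply: funext => j; rewrite (hl j).2.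
rewrite ep in mp' np'.
have nyp : nY p' = nY p by rewrite /zN np'.
have := hC0 (p', n) (conj mp' (eq_ind_r (fun t => t <= 1) hp1 nyp)) x hx; rewrite /= ep' kabs_emb ger0_norm ?asum_ge0 //.
move=> h; apply: le_trans h _.
apply: le_trans (_ : Num.max C0 0 * nX x <= _).
  by apply: ler_wpM2r; [exact: (zN_ge0 kabs_emb sX hE)|rewrite le_max lexx].
by rewrite -[X in _ <= X]mulr1 ler_wpM2l // le_max lexx orbT.
Qed.


Local Notation xv v := (fun j => nth 0 (map fst v) j).
Local Notation pv v := (fun j => nth 0 (map snd v) j).
Local Notation alpha := (alphaXY X Y E G).

Lemma phi_tens_eq {u v : tens E G} : tens_eq u v -> phiT T u = phiT T v.
Proof.
move=> h; apply: (h (fun x p => fapp p (T x))); split.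
  by move=> y a u1 u2 /=; rewrite TL (fappL F).
by move=> x a p q.
Qed.

Lemma phi_nil : phiT T [::] = 0.
Proof. by rewrite /phiT big_nil. Qed.

Lemma phi_scale c u : phiT T (tens_scale c u) = c * phiT T u.
Proof.
rewrite /phiT /tens_scale big_map mulr_sumr; apply: eq_bigr => p _ /=.
by rewrite TZ (fappZ F).
Qed.

Lemma phi_sub u v : phiT T (tens_sub u v) = phiT T u - phiT T v.
Proof. by have := phi_scale (-1) v; rewrite /phiT /tens_add => h; rewrite /tens_sub big_cat h mulN1r. Qed.

Lemma phi_list (v : tens E G) : phiT T v = psum (xv v) (pv v) (size v).
Proof.
rewrite /phiT (big_nth (0, 0)) big_mkord; apply: eq_bigr => -[j hj] _.
by rewrite /term /= !(nth_map (0, 0)).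
Qed.

Lemma xv_mem (v : tens E G) : sc_mem X E (xv v).
Proof.
apply: (zc00 sX hE); exists (size v) => j hj.
by rewrite nth_default // size_map.
Qed.

Lemma pv_mem (v : tens E G) : sc_mem Y G (pv v).
Proof.
apply: (zc00 sY bG); exists (size v) => j hj.
by rewrite nth_default // size_map.
Qed.

Lemma alpha_ge0 (u : tens E G) : (0 <= alpha u)%E.
Proof.
apply: le_ereal_inf_tmp => _ [v _ <-].
rewrite (zNE sX hE (xv_mem v)) (zNE sY bG (pv_mem v)) -EFinM lee_fin.
by rewrite mulr_ge0 //; [apply: (zN_ge0 kabs_emb sX hE (xv_mem v))|apply: (zN_ge0 kabs_emb sY bG (pv_mem v))].
Qed.

Lemma alpha_le_v (u v : tens E G) : tens_eq v u -> (alpha u <= (nX (xv v) * nY (pv v))%:E)%E.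
Proof.
move=> h; apply: ereal_inf_lbound; exists v => //.
by rewrite (zNE sX hE (xv_mem v)) (zNE sY bG (pv_mem v)) -EFinM.
Qed.

Lemma term0x p j : term 0 p j = 0.
Proof. by rewrite /term /= T0 (fapp0 F). Qed.

Lemma term0p x j : term x 0 j = 0.
Proof. by []. Qed.

Lemma asum_hom s0 : 0 <= s0 ->
  (forall x, sc_mem X E x -> nX x <= 1 -> forall p, sc_mem Y G p -> nY p <= 1 ->
     forall n, asum x p n <= s0) ->
  forall x p n, sc_mem X E x -> sc_mem Y G p -> asum x p n <= s0 * nX x * nY p.
Proof.
move=> s00 hs x p n hx hp.
have [x0|xn0] := eqVneq (nX x) 0.
  rewrite x0 mulr0 mul0r (zN_eq0 sX hE hx x0) /asum big1 // => j _.
  by rewrite term0x (kabs0 S).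
have [p0|pn0] := eqVneq (nY p) 0.
  rewrite p0 mulr0 (zN_eq0 sY bG hp p0) /asum big1 // => j _.
  by rewrite term0p (kabs0 S).
have xp : 0 < nX x by rewrite lt_def xn0 (zN_ge0 kabs_emb sX hE hx).
have pp : 0 < nY p by rewrite lt_def pn0 (zN_ge0 kabs_emb sY bG hp).
pose c1 := emb (nX x)^-1; pose c2 := emb (nY p)^-1.
have k1 : kabs c1 = (nX x)^-1 by rewrite kabs_emb ger0_norm // invr_ge0 ltW.
have k2 : kabs c2 = (nY p)^-1 by rewrite kabs_emb ger0_norm // invr_ge0 ltW.
have hx' : sc_mem X E (c1 *: x) by apply: (zmemZ sX hE).
have hp' : sc_mem Y G (c2 *: p) by apply: (zmemZ sY bG).
have := hs _ hx' _ _ hp' _ n.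
have -> : asum (c1 *: x) (c2 *: p) n = (nX x)^-1 * (nY p)^-1 * asum x p n.
  rewrite /asum mulr_sumr; apply: eq_bigr => j _.
  rewrite /term (_ : (c1 *: x) j = c1 *: x j) // (_ : (c2 *: p) j = c2 *: p j) //.
  rewrite TZ (fappZ F) (fappZl F) !(kabsM S) k1 k2; ring.
move=> h; have h' := h _ _; rewrite (zNZ sX hE c1 hx) (zNZ sY bG c2 hp) k1 k2 !mulVf ?gt_eqF // in h'.
have {h h'} h := h' (lexx _) (lexx _).
have e : asum x p n = (nX x * nY p) * ((nX x)^-1 / nY p * asum x p n).
  by field; rewrite ?gt_eqF.
apply: (@le_trans _ _ ((nX x * nY p) * s0)); last by rewrite mulrC mulrA.
rewrite {1}e; apply: ler_wpM2l => //; by rewrite mulr_ge0 // ltW.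
Qed.


Local Notation sn := (sumnorm X (dual_class Y) T).

Lemma A_upper x p n : sc_mem X E x -> nX x <= 1 -> sc_mem Y G p -> nY p <= 1 ->
  ((asum x p n)%:E <= sn)%E.
Proof.
move=> hx hx1 hp hp1.
apply: le_trans (series_ge (fun j => kabs (term x p j)) n (fun j => kabs_ge0 S _)) _.
apply: (@le_trans _ _ (sc_norm (dual_class Y) F (T \o x))).
  by apply: ereal_sup_ubound; exists p => //; split => //; rewrite (zNE sY bG hp) lee_fin.
by apply: ereal_sup_ubound; exists x => //; split => //; rewrite (zNE sX hE hx) lee_fin.
Qed.

Lemma s_bounds : summing X (dual_class Y) T -> exists s0, 0 <= s0 /\ sn = s0%:E.
Proof.
move=> hs; have [C [C0 hC]] := fin_bound hs.
have up : (sn <= C%:E)%E.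
  apply: ge_ereal_sup => _ [x [hx hx1] <-].
  apply: ge_ereal_sup => _ [p [hp hp1] <-].
  rewrite (zNE sX hE hx) lee_fin in hx1; rewrite (zNE sY bG hp) lee_fin in hp1.
  apply: series_le => [j|n]; first exact: kabs_ge0.
  by rewrite lee_fin; apply: hC.
have lo : (0 <= sn)%E.
  have := A_upper 0 0 0 (zmem0 sX hE) _ (zmem0 sY bG) _.
  by rewrite /asum big_ord0 (zN0 sX hE) (zN0 sY bG) ler01; apply.
exists (fine sn); split; first exact: fine_ge0.
by rewrite fineK // ge0_fin_numE //; apply: le_lt_trans up (ltry _).
Qed.

Lemma tens_eq_refl (u : tens E G) : tens_eq u u.
Proof. by []. Qed.

Lemma alpha_fin (u : tens E G) : alpha u \is a fin_num.
Proof.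
rewrite ge0_fin_numE ?alpha_ge0 //; apply: le_lt_trans (alpha_le_v u u (tens_eq_refl u)) (ltry _).
Qed.

Lemma phi_bound s0 : 0 <= s0 ->
  (forall x p n, sc_mem X E x -> sc_mem Y G p -> asum x p n <= s0 * nX x * nY p) ->
  forall u, ((kabs (phiT T u))%:E <= s0%:E * alpha u)%E.
Proof.
move=> s00 hom u.
have key v : tens_eq v u -> kabs (phiT T u) <= s0 * (nX (xv v) * nY (pv v)).
  move=> h; rewrite -(phi_tens_eq h) phi_list; apply: le_trans (psum_le _ _ _) _.
  by rewrite mulrA; apply: hom; [apply: xv_mem|apply: pv_mem].
have [s0e|s0p] := eqVneq s0 0.
  have := key u (tens_eq_refl u); rewrite s0e mul0r => h.
  have -> : kabs (phiT T u) = 0 by apply/eqP; rewrite eq_le h kabs_ge0.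
  by rewrite mul0e.
have s0p' : 0 < s0 by rewrite lt_def s0p.
apply: (@le_trans _ _ (s0%:E * (kabs (phiT T u) / s0)%:E)%E).
  by rewrite -EFinM lee_fin mulrC divfK.
apply: lee_wpmul2l; first by rewrite lee_fin.
apply: le_ereal_inf_tmp => _ [v hv <-].
rewrite (zNE sX hE (xv_mem v)) (zNE sY bG (pv_mem v)) -EFinM lee_fin ler_pdivrMr // mulrC.
exact: key.
Qed.

Lemma part_a : summing X (dual_class Y) T ->
  qcontinuous alpha (phiT T) /\ (qfnorm alpha (phiT T) <= sn)%E.
Proof.
move=> hs; have [s0 [s00 hs0]] := s_bounds hs.
have hom : forall x p n, sc_mem X E x -> sc_mem Y G p -> asum x p n <= s0 * nX x * nY p.
  apply: asum_hom => // x hx hx1 p hp hp1 n.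
  by have := A_upper x p n hx hx1 hp hp1; rewrite hs0 lee_fin.
have pb := phi_bound s0 s00 hom.
split.
  move=> u0 e e0; exists (e / (s0 + 1)); first by rewrite divr_gt0 // ltr_wpDl.
  move=> u hu; rewrite -phi_sub.
  have := pb (tens_sub u u0); rewrite -(fineK (alpha_fin (tens_sub u u0))) in hu *.
  rewrite -EFinM lee_fin lte_fin in hu * => h.
  have a0 : 0 <= fine (alpha (tens_sub u u0)) by apply: fine_ge0; apply: alpha_ge0.
  apply: le_lt_trans h _.
  apply: (@le_lt_trans _ _ (s0 * (e / (s0 + 1)))).
    by apply: ler_wpM2l => //; apply: ltW.
  by rewrite mulrA ltr_pdivrMr ?ltr_wpDl // mulrDr mulr1 mulrC ltrDl.
apply: ge_ereal_sup => _ [u hu <-].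
apply: le_trans (pb u) _; rewrite hs0.
by rewrite -[X in (_ <= X)%E]mule1; apply: lee_wpmul2l; rewrite ?lee_fin.
Qed.


Lemma rotated2 x p n : sc_mem Y G p -> exists p', [/\ sc_mem Y G p', nY p' = nY p &
  psum x p' n = emb (asum x p n)].
Proof.
move=> hp; have [p' [hp' ep']] := rotated x p n.
have [l hl] := choice hp'.
have [mp' np'] := scY G bG p l hp (fun j => (hl j).1).
have ep : (fun j => l j *: p j) = p' by apply: funext => j; rewrite (hl j).2.
rewrite ep in mp' np'.
by exists p'; split => //; rewrite /zN np'.
Qed.

Definition vlist (x : nat -> E) (p : nat -> G) n : tens E G := [seq (x j, p j) | j <- iota 0 n].

Lemma xv_vlist x p n : xv (vlist x p n) = Defs.trunc n x.
Proof.
apply: funext => j; rewrite /vlist /Defs.trunc -map_comp.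
case: ltnP => hj.
  by rewrite (nth_map 0%N) ?size_iota // nth_iota.
by rewrite nth_default // size_map size_iota.
Qed.

Lemma pv_vlist x p n : pv (vlist x p n) = Defs.trunc n p.
Proof.
apply: funext => j; rewrite /vlist /Defs.trunc -map_comp.
case: ltnP => hj.
  by rewrite (nth_map 0%N) ?size_iota // nth_iota.
by rewrite nth_default // size_map size_iota.
Qed.

Lemma phi_vlist x p n : phiT T (vlist x p n) = psum x p n.
Proof.
rewrite /phiT /vlist big_map /psum -(big_mkord xpredT (fun j => term x p j)).
by rewrite /index_iota subn0.
Qed.

Lemma alpha_vlist (hfX : fin_determined X \/ fin_dominated X)
  (hfY : fin_determined Y \/ fin_dominated Y) x p n :
  sc_mem X E x -> sc_mem Y G p -> (alpha (vlist x p n) <= (nX x * nY p)%:E)%E.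
Proof.
move=> hx hp; apply: le_trans (alpha_le_v _ _ (tens_eq_refl _)) _.
rewrite xv_vlist pv_vlist lee_fin; apply: ler_pM.
- apply: (zN_ge0 kabs_emb sX hE); apply: (zc00 sX hE); exists n => j hj.
  by rewrite /Defs.trunc ltnNge hj.
- apply: (zN_ge0 kabs_emb sY bG); apply: (zc00 sY bG); exists n => j hj.
  by rewrite /Defs.trunc ltnNge hj.
- exact: (zN_trunc sX hE hfX).
- exact: (zN_trunc sY bG hfY).
Qed.

Lemma b_le (hfX : fin_determined X \/ fin_dominated X)
  (hfY : fin_determined Y \/ fin_dominated Y) : (sn <= qfnorm alpha (phiT T))%E.
Proof.
apply: ge_ereal_sup => _ [x [hx hx1] <-].
apply: ge_ereal_sup => _ [p [hp hp1] <-].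
rewrite (zNE sX hE hx) lee_fin in hx1; rewrite (zNE sY bG hp) lee_fin in hp1.
apply: series_le => [j|n]; first exact: kabs_ge0.
have [p' [mp' np' ep']] := rotated2 x p n hp.
apply: ereal_sup_ubound; exists (vlist x p' n).
  apply: le_trans (alpha_vlist hfX hfY x p' n hx mp') _.
  rewrite lee_fin np'; apply: mulr_ile1 => //.
    exact: (zN_ge0 kabs_emb sX hE hx).
  exact: (zN_ge0 kabs_emb sY bG hp).
by rewrite phi_vlist ep' kabs_emb ger0_norm // asum_ge0.
Qed.

Lemma b_bound (halpha : reasonable_qnorm alpha) : qcontinuous alpha (phiT T) ->
  exists C, 0 <= C /\ forall u, kabs (phiT T u) <= C * fine (alpha u).
Proof.
case: halpha => -[_ _ hz hsc _] _ _ qc.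
have [d d0 hd] := qc [::] 1 ltr01.
exists (2 / d); split; first by rewrite divr_ge0 // ltW.
move=> u; set a := fine (alpha u).
have a0 : 0 <= a by apply: fine_ge0; apply: alpha_ge0.
have [ae|an] := eqVneq a 0.
  have : alpha u = 0%E by rewrite -(fineK (alpha_fin u)) -/a ae.
  move/hz => h; rewrite (phi_tens_eq h) phi_nil (kabs0 S) ae mulr0 //.
have ap : 0 < a by rewrite lt_def an.
pose c := emb (d / (2 * a)).
have kc : kabs c = d / (2 * a) by rewrite kabs_emb ger0_norm // divr_ge0 ?mulr_ge0 // ltW.
have := hd (tens_scale c u).
rewrite /tens_sub /tens_scale /= cats0 -/(tens_scale c u) phi_nil subr0 phi_scale.
rewrite hsc -(fineK (alpha_fin u)) -/a -EFinM lte_fin kc (kabsM S) kc.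
have -> : d / (2 * a) * a = d / 2 by field; rewrite gt_eqF.
have dd : d / 2 < d by lra.
move/(_ dd) => h.
have e : kabs (phiT T u) = (2 * a / d) * (d / (2 * a) * kabs (phiT T u)).
  by field; rewrite ?gt_eqF.
rewrite e; apply: (@le_trans _ _ (2 * a / d * 1)).
  by apply: ler_wpM2l; [rewrite divr_ge0 ?mulr_ge0 // ltW|apply: ltW].
by rewrite mulr1 mulrAC.
Qed.

Lemma b_asum (hfX : fin_determined X \/ fin_dominated X)
  (hfY : fin_determined Y \/ fin_dominated Y) C : 0 <= C ->
  (forall u, kabs (phiT T u) <= C * fine (alpha u)) ->
  forall x p n, sc_mem X E x -> sc_mem Y G p -> asum x p n <= C * nX x * nY p.
Proof.
move=> C0 hC x p n hx hp.
have [p' [mp' np' ep']] := rotated2 x p n hp.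
have := hC (vlist x p' n); rewrite phi_vlist ep' kabs_emb ger0_norm ?asum_ge0 // => h.
apply: le_trans h _; rewrite -mulrA -np'; apply: ler_wpM2l => //.
have := alpha_vlist hfX hfY x p' n hx mp'.
by rewrite -(fineK (alpha_fin _)) lee_fin.
Qed.

Lemma b_summing B : (forall x p n, sc_mem X E x -> sc_mem Y G p -> asum x p n <= B x p) ->
  summing X (dual_class Y) T.
Proof.
move=> hB x hx p hp.
pose a n := asum x p n.
have aS n : a n.+1 = a n + kabs (term x p n) by rewrite /a /asum big_ord_recr.
have amono n m : (n <= m)%N -> a n <= a m.
  move=> /subnK <-; elim: (m - n)%N => [|k IH]; first by rewrite add0n.
  by rewrite addSn aS; apply: le_trans IH _; rewrite lerDl kabs_ge0.
have pdiff n m : (n <= m)%N -> kabs (psum x p m - psum x p n) <= a m - a n.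
  move=> /subnK <-; elim: (m - n)%N => [|k IH]; first by rewrite add0n !subrr (kabs0 S).
  rewrite addSn /psum big_ord_recr /= -/(psum x p _) aS.
  rewrite (_ : psum x p (k + n) + term x p (k + n) - psum x p n =
     (psum x p (k + n) - psum x p n) + term x p (k + n)); last by ring.
  apply: le_trans (kabsD S _ _) _; move: IH; lra.
pose A := range a.
have hA : has_sup A by split; [exists (a 0%N), 0%N|exists (B x p) => _ [n _ <-]; apply: hB].
apply: kcompl => e e0.
have [_ [N _ <-] hN] := sup_adherent e0 hA.
exists N => m n hm hn.
have ub k : a k <= sup A by apply: sup_upper_bound hA _ _; exists k.
wlog nm : m n hm hn / (n <= m)%N.
  move=> W; have [nm|mn] := leqP n m; first exact: W.
  by rewrite (kabsBC kabs_emb); apply: W => //; apply: ltnW.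
apply: le_lt_trans (pdiff _ _ nm) _.
have := ub m; have := amono _ _ hn; move: hN; lra.
Qed.

Lemma main_thm (halpha : reasonable_qnorm alpha) :
  (summing X (dual_class Y) T ->
     qcontinuous alpha (phiT T) /\ (qfnorm alpha (phiT T) <= sn)%E) /\
  ((fin_determined X \/ fin_dominated X) ->
   (fin_determined Y \/ fin_dominated Y) ->
     (qcontinuous alpha (phiT T) <-> summing X (dual_class Y) T) /\
     (summing X (dual_class Y) T -> sn = qfnorm alpha (phiT T))).
Proof.
split; first exact: part_a.
move=> hfX hfY; split.
  split; last by move=> hs; case: (part_a hs).
  move=> qc; have [C [C0 hC]] := b_bound halpha qc.
  exact: (b_summing (fun x p => C * nX x * nY p) (b_asum hfX hfY C C0 hC)).
move=> hs; apply/eqP; rewrite eq_le (b_le hfX hfY) /=.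
by case: (part_a hs).
Qed.

End Main.

Local Open Scope ereal_scope.

Theorem lemma2p4 (R : realType) (S : scal R)
  (HS : S = realS R \/ S = complexS R)
  (X Y : seqclass S)
  (sX : is_seqclass X) (sY : is_seqclass Y)
  (lsX : linearly_stable X) (lsY : linearly_stable Y)
  (scY : spherically_complete Y)
  (hXY : forall x : nat -> (@kspace R S),
     sc_mem X kspace x ->
     sc_mem (dual_class Y) kspace x /\
     sc_norm (dual_class Y) kspace x <= sc_norm X kspace x)
  (E F : nspace S) (hE : banach E) (hF : banach F)
  (T : E -> F) (hT : bounded_op T)
  (halpha : reasonable_qnorm (alphaXY X Y E (dual F))) :
  (* (a) *)
  (summing X (dual_class Y) T ->
     qcontinuous (alphaXY X Y E (dual F)) (phiT T) /\
     qfnorm (alphaXY X Y E (dual F)) (phiT T) <= sumnorm X (dual_class Y) T) /\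
  (* (b) *)
  ((fin_determined X \/ fin_dominated X) ->
   (fin_determined Y \/ fin_dominated Y) ->
     (qcontinuous (alphaXY X Y E (dual F)) (phiT T) <-> summing X (dual_class Y) T) /\
     (summing X (dual_class Y) T ->
        sumnorm X (dual_class Y) T = qfnorm (alphaXY X Y E (dual F)) (phiT T))).
Proof.
have [emb [ke rt kc]] := scal_facts S HS.
exact: (main_thm ke rt kc X Y sX sY scY E F hE hF T hT halpha).
Qed.
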